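(* Let $(G,\rho)$ and $(G',\rho')$ be ribbon graphs on the same two vertices $v,w$, each having $n$ edges (all joining $v$ and $w$). Let $\hat\gamma:\operatorname{Pic}^0(G)\to\operatorname{Pic}^0(G')$ be the isomorphism induced by the identity on $V_{gen}=\{v,w\}$ (sending the class of a configuration to the class of the configuration with the same number of chips on each vertex). Fix $\alpha\in\{\text{rotor routing},\text{Bernardi}\}$ and suppose there is a bijection $\varphi:\mathcal T(G)\to\mathcal T(G')$ such that for each $u\in\{v,w\}$, $\varphi(\alpha_u^{G}(S,T))=\alpha_u^{G'}(\hat\gamma(S),\varphi(T))$ for all $S\in\operatorname{Pic}^0(G)$, $T\in\mathcal T(G)$. Then $(G,\rho)$ and $(G',\rho')$ have the same genus.
   Context: Graphs are finite, connected, loopless, possibly with multiple edges; a two-vertex such graph with $n$ edges has $\operatorname{Pic}^0\cong\mathbb Z/n\mathbb Z$ and its spanning trees are the single edges. A ribbon graph assigns to each vertex $u$ a cyclic order $\rho_u$ on incident edges. $\operatorname{Pic}^0$ is degree-zero chip configurations modulo firings (firing $u$ sends one chip from $u$ along each incident edge); $\operatorname{Pic}^k$ likewise for degree $k$. Rotor routing torsor $r_u$: for $S\in\operatorname{Pic}^0$, $T\in\mathcal T$, take a representative of $S$ nonnegative away from $u$; orient $T$ towards $u$ giving each other vertex a rotor; while some vertex $x\neq u$ has positive chips, advance its rotor to the next edge of $\rho_x$ and send a chip along it; at the end the rotors form $r_u(S,T)$. Bernardi torsor $\beta_u$: using half-edges $(e,x)$, for $T$ start at $(e_0,u)$ with $e_0$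 a fixed edge at $u$; at $(e',x')$: if $e'\in T$ with other endpoint $y$, move to $(e'',y)$, $e''$ following $e'$ in $\rho_y$; if $e'\notin T$, move to $(\tilde e,x')$, $\tilde e$ following $e'$ in $\rho_{x'}$, placing a chip on $x'$ if the other half-edge of $e'$ was not yet visited; stop on return to $(e_0,u)$. This gives divisors $D_T$ of degree $|E|-|V|+1$ in bijection with $\operatorname{Pic}^{|E|-|V|+1}$, and $\beta_u(S,T)$ is the unique $T'$ with $[D_{T'}]=[D_T]+S$. Genus: a cycle is a closed walk which, entering $x$ along $e$, exits along the edge following $e$ in $\rho_x$; the genus $g$ satisfies $2g=2-|V|+|E|-\operatorname{cyc}$, with $\operatorname{cyc}$ the number of cycles. *)

(* Defs.v *)
(* Two-vertex ribbon graphs: vertices are booleans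
   (true = v, false = w); the n edges (all joining v and w) are 'I_n. *)
From mathcomp Require Import all_boot all_order all_fingroup all_algebra.
Set Implicit Arguments. Unset Strict Implicit. Unset Printing Implicit Defensive.
Import GRing.Theory Num.Theory.

Definition vtx := bool.

(* A cyclic order on the n edges at a vertex, given by its "next edge" map:
   a permutation with a single orbit. *)
Definition cyclic_order n (s : {perm 'I_n}) : Prop :=
  forall e e' : 'I_n, fconnect s e e'.

(* Darts (e, x): traverse e starting from x.  Entering the other endpoint y
   along e, the walk exits along the edge following e in rho_y. *)
Definition face_step n (rho : vtx -> {perm 'I_n}) (d : 'I_n * vtx)
  : 'I_n * vtx := (rho (~~ d.2) d.1, ~~ d.2).

Definition ncycles n (rho : vtx -> {perm 'I_n}) : nat :=
  fcard (face_step rho) (predT : {pred 'I_n * vtx}).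

(* 2g = 2 - |V| + |E| - cyc, with |V| = 2, |E| = n *)
Definition genus n (rho : vtx -> {perm 'I_n}) : nat :=
  (2 + n - 2 - ncycles rho)./2.

Definition divisor := vtx -> int.
Definition deg0 (D : divisor) : Prop := (D true + D false = 0)%R.

(* firing x: x loses one chip along each of its n edges, the other vertex
   receives n chips *)
Definition fire n (x : vtx) : divisor :=
  fun y => if y == x then (- ((Posz n)))%R else (Posz n).

Definition lin_equiv n (D D' : divisor) : Prop :=
  exists c : vtx -> int,
    forall y, D' y = (D y + \sum_(x : vtx) c x * fire n x y)%R.

Definition gamma_hat (S : divisor) : divisor := S.

(* Spanning trees are single edges.  For sink u, the other vertex x = ~~u
   has rotor T.  Representative of S nonnegative away from u: the one with
   (S x mod n) chips on x.  Each chip: advance the rotor, send a chip. *)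
Definition rotor n (rho : vtx -> {perm 'I_n}) (u : vtx) (S : divisor)
  (T : 'I_n) : 'I_n :=
  iter `|(S (~~ u) %% (Posz n))%Z|%N (rho (~~ u)) T.

Definition bern_step n (rho : vtx -> {perm 'I_n}) (T : 'I_n)
  (h : 'I_n * vtx) : 'I_n * vtx :=
  if h.1 == T then (rho (~~ h.2) h.1, ~~ h.2) else (rho h.2 h.1, h.2).

Definition bern_tour n (rho : vtx -> {perm 'I_n}) (e0 : vtx -> 'I_n)
  (u : vtx) (T : 'I_n) : seq ('I_n * vtx) :=
  fingraph.orbit (bern_step rho T) (e0 u, u).

Definition bern_div n (rho : vtx -> {perm 'I_n}) (e0 : vtx -> 'I_n)
  (u : vtx) (T : 'I_n) : divisor :=
  fun y =>
    let t := bern_tour rho e0 u T in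
    Posz (\sum_(i < size t | let h := nth (e0 u, u) t i in
                         [&& h.2 == y, h.1 != T &
                             (h.1, ~~ h.2) \notin take i t]) 1)%N.

(* T' = beta_u(S, T)  iff  [D_T'] = [D_T] + S *)
Definition bern_rel n (rho : vtx -> {perm 'I_n}) (e0 : vtx -> 'I_n)
  (u : vtx) (S : divisor) (T T' : 'I_n) : Prop :=
  lin_equiv n (fun y => (bern_div rho e0 u T y + S y)%R) (bern_div rho e0 u T').

Inductive torsor_kind := RotorRouting | Bernardi.

(* torsor_rel k ... u S T T'  <->  T' = alpha_u(S, T) *)
Definition torsor_rel (k : torsor_kind) n (rho : vtx -> {perm 'I_n})
  (e0 : vtx -> 'I_n) (u : vtx) (S : divisor) (T T' : 'I_n) : Prop :=
  match k with
  | RotorRouting => T' = rotor rho u S T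
  | Bernardi => bern_rel rho e0 u S T T'
  end.

(* Main.v *)
Require Import Defs.
From mathcomp Require Import all_boot all_order all_fingroup all_algebra zify.
Set Implicit Arguments. Unset Strict Implicit. Unset Printing Implicit Defensive.

Lemma traject_map (A B : Type) (f : A -> A) (s : B -> B) (g : B -> A) x m :
  (forall i, i.+1 < m -> f (g (iter i s x)) = g (s (iter i s x))) ->
  traject f (g x) m = map g (traject s x m).
Proof.
elim: m x => [|m IH] x H //=; congr (_ :: _).
case: m IH H => [|m] IH H //.
rewrite (H 0) // -(IH (s x)) // => i Hi.
by rewrite -!iterSr; apply: H.
Qed.

Lemma iter_map (A B : Type) (f : A -> A) (s : B -> B) (g : B -> A) x m :
  (forall i, i < m -> f (g (iter i s x)) = g (s (iter i s x))) ->
  iter m f (g x) = g (iter m s x).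
Proof.
elim: m => [|m IH] H //=.
by rewrite IH ?H // => i Hi; apply: H; apply: ltnW.
Qed.

Section Cyc.
Variables (n : nat) (s : {perm 'I_n}) (cyc : cyclic_order s).

Lemma order_cyc x : fingraph.order s x = n.
Proof.
rewrite /fingraph.order -[RHS]card_ord; apply: eq_card => y; rewrite !inE; exact: cyc.
Qed.

Lemma iter_cyc_inj x i j : i < n -> j < n -> iter i s x = iter j s x -> i = j.
Proof.
move=> Hi Hj E.
by rewrite -(findex_iter (f:=s) (x:=x) (i:=i)) ?order_cyc // E findex_iter ?order_cyc.
Qed.

Lemma iter_cyc_n x : iter n s x = x.
Proof. have := fingraph.iter_order (perm_inj (s:=s)) x; by rewrite order_cyc. Qed.

Lemma traject_cyc x : traject s x n = fingraph.orbit s x.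
Proof. by rewrite /fingraph.orbit order_cyc. Qed.

Lemma traject_cyc_uniq x : uniq (traject s x n).
Proof. by rewrite traject_cyc orbit_uniq. Qed.

Lemma traject_cyc_all x y : y \in traject s x n.
Proof. by rewrite traject_cyc -fconnect_orbit; apply: cyc. Qed.

Lemma findex_cyc x y : findex s x y < n /\ iter (findex s x y) s x = y.
Proof. have := findex_max (cyc x y); rewrite order_cyc => ->; split => //; exact: iter_findex. Qed.

End Cyc.
Definition Qb n (y : vtx) (T : 'I_n) (h : 'I_n * vtx) (p : seq ('I_n * vtx)) : bool :=
  [&& h.2 == y, h.1 != T & (h.1, ~~ h.2) \notin p].

Fixpoint cnt n (y : vtx) (T : 'I_n) pre t : nat :=
  match t with [::] => 0 | h :: t' => Qb y T h pre + cnt y T (rcons pre h) t' end.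

Lemma sum_cnt n y (T : 'I_n) x0 t pre :
  (\sum_(i < size t | Qb y T (nth x0 t i) (pre ++ take i t)) 1)%N = cnt y T pre t.
Proof.
elim: t pre => [|h t IH] pre; first by rewrite big_ord0.
rewrite big_mkcond big_ord_recl cats0; congr (_ + _); try by case: (Qb y T h pre).
rewrite -[RHS]/(cnt y T (rcons pre h) t) -(IH (rcons pre h)) [RHS]big_mkcond.
apply: eq_bigr => i _ /=.
by rewrite cat_rcons.
Qed.

Lemma cnt_cat n y (T : 'I_n) pre s1 s2 :
  cnt y T pre (s1 ++ s2) = cnt y T pre s1 + cnt y T (pre ++ s1) s2.
Proof.
elim: s1 pre => [|h s1 IH] pre /=; first by rewrite cats0.
by rewrite IH cat_rcons addnA.
Qed.

Lemma cnt_side n y (T : 'I_n) x pre s :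
  cnt y T pre (map (fun e => (e, x)) s) = count (fun e => Qb y T (e, x) pre) s.
Proof.
elim: s pre => [|e s IH] pre //=; rewrite IH; congr (_ + _).
apply: eq_count => e'; rewrite /Qb /= mem_rcons in_cons.
have -> : ((e', ~~ x) == (e, x)) = false.
  have Hx : ~~ x <> x by case: (x).
  by apply/eqP => -[_].
by [].
Qed.

Lemma cnt_other n y (T : 'I_n) x pre s : x != y ->
  cnt y T pre (map (fun e => (e, x)) s) = 0.
Proof.
move=> Hxy; rewrite cnt_side; apply/eqP; rewrite -leqn0 leqNgt -has_count.
by apply/hasPn => e _; rewrite /Qb /= (negbTE Hxy).
Qed.

Lemma QbE n y (T : 'I_n) e x p :
  Qb y T (e, x) p = [&& x == y, e != T & (e, ~~ x) \notin p].
Proof. by []. Qed.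

Lemma fcycle_traject (A : eqType) (g : A -> A) x m :
  iter m.+1 g x = x -> fcycle g (traject g x m.+1).
Proof.
move=> H; rewrite /cycle /= rcons_path fpath_traject /= last_traject.
by move: H => /= ->.
Qed.

Section Bern.
Variables (n : nat) (rho : vtx -> {perm 'I_n}) (cyc : forall u, cyclic_order (rho u)).
Variables (e0 : vtx -> 'I_n) (u : vtx) (T : 'I_n) (k : nat).
Hypotheses (Hk : k < n) (HT : iter k (rho u) (e0 u) = T).

Local Notation a := (e0 u).
Local Notation sg := (rho u).
Local Notation tau := (rho (~~ u)).
Local Notation f := (bern_step rho T).

Lemma bs_ne e x : e != T -> f (e, x) = (rho x e, x).
Proof. by move=> H; rewrite /bern_step /= (negbTE H). Qed.

Lemma bs_T x : f (T, x) = (rho (~~ x) T, ~~ x).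
Proof. by rewrite /bern_step /= eqxx. Qed.

Lemma neT i : i < n -> i != k -> iter i sg a != T.
Proof.
move=> Hi Hik; rewrite -HT; apply/eqP => /(iter_cyc_inj (cyc u) Hi Hk) E.
by rewrite E eqxx in Hik.
Qed.

Lemma iter_sT i : iter i sg (sg T) = iter (i + k.+1) sg a.
Proof. by rewrite -iterSr -HT -iterD addSnnS. Qed.

Lemma tau_neT i : i.+1 < n -> iter i tau (tau T) != T.
Proof.
move=> Hi; rewrite -iterSr; apply/eqP => E.
by have := iter_cyc_inj (cyc (~~ u)) (x := T) (i := i.+1) (j := 0) Hi (leq_ltn_trans (leq0n k) Hk) E.
Qed.

Definition Xs := map (fun e => (e, u)) (traject sg a k.+1).
Definition Ys := map (fun e => (e, ~~ u)) (traject tau (tau T) n).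
Definition Zs := map (fun e => (e, u)) (traject sg (sg T) (n - k.+1)).
Definition NN := k.+1 + n + (n - k.+1).

Lemma tour : traject f (a, u) NN = Xs ++ Ys ++ Zs /\ iter NN f (a, u) = (a, u).
Proof.
have n0 : 0 < n by apply: leq_ltn_trans Hk.
have H1 : traject f (a, u) k.+1 = Xs.
  apply: (traject_map (g := fun e => (e, u))) => i Hi.
  by rewrite bs_ne // neT //; lia.
have H1' : iter k.+1 f (a, u) = (tau T, ~~ u).
  rewrite iterS (iter_map (g := fun e => (e, u)) (s := sg)) ?HT ?bs_T //.
  by move=> i Hi; rewrite bs_ne // neT //; lia.
have H2 : traject f (tau T, ~~ u) n = Ys.
  apply: (traject_map (g := fun e => (e, ~~ u))) => i Hi.
  by rewrite bs_ne // tau_neT.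
have H2' : iter n f (tau T, ~~ u) = (sg T, u).
  rewrite -[X in iter X _ _](prednK n0) iterS (iter_map (g := fun e => (e, ~~ u)) (s := tau)).
    by rewrite -iterSr prednK // iter_cyc_n // bs_T negbK.
  by move=> i Hi; rewrite bs_ne // tau_neT //; lia.
have H3 : traject f (sg T, u) (n - k.+1) = Zs.
  apply: (traject_map (g := fun e => (e, u))) => i Hi.
  by rewrite bs_ne // iter_sT neT //; lia.
have H3' : iter (n - k.+1) f (sg T, u) = (a, u).
  rewrite (iter_map (g := fun e => (e, u)) (s := sg)).
    by rewrite iter_sT subnK // iter_cyc_n.
  by move=> i Hi; rewrite bs_ne // iter_sT neT //; lia.
rewrite /NN; split.
  by rewrite !trajectD H1 H1' H2 -catA addnC iterD H1' H2' H3.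
have -> : k.+1 + n + (n - k.+1) = (n - k.+1) + (n + k.+1) by lia.
by rewrite !iterD H1' H2' H3'.
Qed.

Lemma XZ : traject sg a n = traject sg a k.+1 ++ traject sg (sg T) (n - k.+1).
Proof.
by rewrite -[X in traject _ _ X](subnKC Hk) trajectD iterS HT.
Qed.

Lemma tour_uniq : uniq (Xs ++ Ys ++ Zs).
Proof.
have injl : forall x : vtx, injective (fun e : 'I_n => (e, x)) by move=> x e e' [].
have Hperm : perm_eq (Xs ++ Ys ++ Zs) (map (fun e => (e, u)) (traject sg a n) ++ Ys).
  by rewrite XZ map_cat -catA perm_cat2l perm_catC.
rewrite (perm_uniq Hperm) cat_uniq; apply/and3P; split.
- by rewrite map_inj_uniq // traject_cyc_uniq.
- apply/hasPn => z /mapP [e _ ->]; apply/mapP => -[e' _ [_]].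
  by case: (u).
- by rewrite /Ys map_inj_uniq // traject_cyc_uniq.
Qed.

Lemma bern_tourE : bern_tour rho e0 u T = Xs ++ Ys ++ Zs.
Proof.
have [Ht Hi] := tour.
have Hord : fingraph.order f (a, u) = NN.
  have -> : NN = size (Xs ++ Ys ++ Zs) by rewrite -Ht size_traject.
  apply: order_cycle; last by rewrite -Ht /NN addSn /= mem_head.
    rewrite -Ht /NN addSn; apply: fcycle_traject; by rewrite -addSn Hi.
  exact: tour_uniq.
by rewrite /bern_tour /fingraph.orbit Hord Ht.
Qed.

Lemma bern_div_cnt y : bern_div rho e0 u T y = Posz (cnt y T [::] (Xs ++ Ys ++ Zs)).
Proof.
rewrite /bern_div -bern_tourE; congr Posz.
exact: (sum_cnt y T (e0 u, u) (bern_tour rho e0 u T) [::]).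
Qed.

Lemma count0 (A : eqType) (P : pred A) s : (forall x, x \in s -> ~~ P x) -> count P s = 0.
Proof. by move=> H; apply/eqP; rewrite -leqn0 leqNgt -has_count; apply/hasPn. Qed.

Lemma bern_u : bern_div rho e0 u T u = Posz k.
Proof.
rewrite bern_div_cnt; congr Posz; rewrite !cnt_cat !cat0s [cnt _ _ _ Ys]cnt_other; last by case: (u).
rewrite [cnt _ _ _ Zs]cnt_side count0 ?addn0; last first.
  move=> e _; rewrite QbE mem_cat (_ : (e, ~~ u) \in Ys) ?orbT ?andbF //.
  by apply/map_f; apply: traject_cyc_all.
rewrite [cnt _ _ _ Xs]cnt_side trajectSr HT -cats1 count_cat /= /Qb /= eqxx /= addn0.
rewrite -[RHS](size_traject sg a k) -count_predT eqxx /= addn0.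
apply: eq_in_count => e /trajectP [i Hi ->].
by rewrite neT //; lia.
Qed.

Lemma bern_nu : bern_div rho e0 u T (~~ u) = Posz (n - k.+1).
Proof.
rewrite bern_div_cnt; congr Posz; rewrite !cnt_cat !cat0s [cnt _ _ _ Xs]cnt_other; last by case: (u).
rewrite [cnt _ _ _ Zs]cnt_other ?addn0; last by case: (u).
rewrite [cnt _ _ _ Ys]cnt_side /Qb /= eqxx /= negbK.
set A1 := traject sg a k.+1.
have memX : forall e, ((e, u) \in Xs) = (e \in A1).
  by move=> e; rewrite /Xs mem_map // => e1 e2 [].
have A1u : uniq A1.
  by have := traject_cyc_uniq (cyc u) a; rewrite XZ cat_uniq => /andP[].
have TA1 : T \in A1 by apply/trajectP; exists k.
set P := fun e => (e != T) && ((e, u) \notin Xs).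
set B1 := traject tau (tau T) n.
have -> : count P B1 = #|[predC A1]|.
  rewrite -size_filter -(card_uniqP _); last by rewrite filter_uniq // traject_cyc_uniq.
  apply: eq_card => e; rewrite mem_filter /P memX (traject_cyc_all (cyc _)) andbT [in RHS]inE.
  by case: eqP => // ->; rewrite TA1.
have := cardC (mem A1); rewrite card_ord (card_uniqP A1u) size_traject.
move=> H; rewrite add0n -[X in X - _]H addKn.
by [].
Qed.

End Bern.

Definition Su (u : vtx) : divisor := fun y => if y == u then 1%R else (-1)%R.

Lemma deg0_Su u : deg0 (Su u).
Proof. by rewrite /deg0 /Su; case: u. Qed.

Lemma sum_fire n (c : vtx -> int) y :
  (\sum_(x : vtx) c x * fire n x y)%R = ((c (~~ y) - c y) * Posz n)%R.
Proof.
rewrite big_bool /fire; case: y => /=; lia.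
Qed.

Lemma int_case (n k k' : nat) (d : int) : k < n -> k' < n ->
  Posz k' = (Posz k + 1 + d * Posz n)%R -> k' = k.+1 \/ (k = n.-1 /\ k' = 0).
Proof.
move=> Hk Hk' E.
have : (d = 0 \/ d = -1)%R.
  have [Hd|[Hd|Hd]] : (d < 0 \/ 0 < d \/ d = 0)%R by lia.
  - right. have : (d <= -1)%R by lia. move=> Hd1. nia.
  - have : (1 <= d)%R by lia. move=> Hd1. nia.
  - by left.
case=> Hd; subst d; lia.
Qed.

Section BernRel.
Variables (n : nat) (rho : vtx -> {perm 'I_n}) (cyc : forall u, cyclic_order (rho u)).
Variables (e0 : vtx -> 'I_n) (u : vtx).

Lemma bern_fwd T : bern_rel rho e0 u (Su u) T (rho u T).
Proof.
have [Hk HT] := findex_cyc (cyc u) (e0 u) T.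
set k := findex _ _ _ in Hk HT.
have Du := bern_u cyc Hk HT; have Dnu := bern_nu cyc Hk HT.
have [Hkn|Hkn] : k.+1 < n \/ k.+1 = n by lia.
- have HT' : iter k.+1 (rho u) (e0 u) = rho u T by rewrite iterS HT.
  have Du' := bern_u cyc Hkn HT'; have Dnu' := bern_nu cyc Hkn HT'.
  exists (fun _ => 0%R) => y; rewrite sum_fire.
  have [->|->] : y = u \/ y = ~~ u by case: y; case: (u); auto.
  + by rewrite Du Du' /Su eqxx; lia.
  + rewrite Dnu Dnu' /Su; have -> : (~~ u == u) = false by case: (u).
    lia.
- have HT' : iter 0 (rho u) (e0 u) = rho u T.
  by rewrite /= -HT -iterS Hkn iter_cyc_n.
  have n0 : 0 < n by lia.
  have Du' := bern_u cyc n0 HT'; have Dnu' := bern_nu cyc n0 HT'.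
  exists (fun x => if x == u then 1%R else 0%R) => y; rewrite sum_fire.
  have [->|->] : y = u \/ y = ~~ u by case: y; case: (u); auto.
  + rewrite Du Du' /Su !eqxx; have -> : (~~ u == u) = false by case: (u).
    lia.
  + rewrite Dnu Dnu' /Su negbK eqxx; have -> : (~~ u == u) = false by case: (u).
    lia.
Qed.

Lemma bern_inj T T' : bern_rel rho e0 u (Su u) T T' -> T' = rho u T.
Proof.
case=> c /(_ u); rewrite sum_fire /Su eqxx.
have [Hk HT] := findex_cyc (cyc u) (e0 u) T.
have [Hk' HT'] := findex_cyc (cyc u) (e0 u) T'.
rewrite (bern_u cyc Hk HT) (bern_u cyc Hk' HT').
set k := findex _ _ T in Hk HT *; set k' := findex _ _ T' in Hk' HT' *.
move=> E.
have [E1|[Ek E1]] : (k' = k.+1) \/ (k = n.-1 /\ k' = 0).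
  clearbody k k'; exact: int_case E.
- by rewrite -HT' E1 iterS HT.
- rewrite -HT' E1 -HT /= -iterS Ek prednK ?iter_cyc_n //; lia.
Qed.

End BernRel.

Lemma ncycles_eq n (rho rho' : vtx -> {perm 'I_n}) (phi : 'I_n -> 'I_n) :
  bijective phi -> (forall x e, phi (rho x e) = rho' x (phi e)) ->
  ncycles rho = ncycles rho'.
Proof.
move=> bphi comm.
have inj_fs : forall r : vtx -> {perm 'I_n}, injective (face_step r).
  move=> r [e1 x1] [e2 x2] [E1 E2].
  have Ex := negb_inj E2.
  by subst; move: E1 => /perm_inj ->.
pose h := fun d : 'I_n * vtx => (phi d.1, d.2).
have inj_h : injective h.
  by move=> [e1 x1] [e2 x2] [/(bij_inj bphi) -> ->].
have hcomm : forall d, face_step rho' (h d) = h (face_step rho d).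
  by move=> [e x]; rewrite /h /face_step /= comm.
have symf : forall r : vtx -> {perm 'I_n}, connect_sym (frel (face_step r)).
  by move=> r; apply: fconnect_sym.
have cl : closed (frel (face_step rho')) (predT : {pred 'I_n * vtx}) by [].
rewrite /ncycles (adjunction_n_comp h (symf rho') (symf rho) cl).
  by apply: eq_n_comp_r.
apply: strict_adjunction => //.
  case: bphi => psi K1 K2.
  apply/subsetP => d _; apply/codomP; exists (psi d.1, d.2).
  by rewrite /h /= K2; case: d.
move=> x y _ /=; rewrite hcomm; exact: (inj_eq inj_h).
Qed.

Theorem proposition3p6 (k : torsor_kind) (n : nat)
  (rho rho' : vtx -> {perm 'I_n}) (e0 e0' : vtx -> 'I_n)
  (phi : 'I_n -> 'I_n) :
  (0 < n)%N ->
  (forall u, cyclic_order (rho u)) ->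
  (forall u, cyclic_order (rho' u)) ->
  bijective phi ->
  (forall (u : vtx) (S : divisor) (T T' : 'I_n), deg0 S ->
     torsor_rel k rho e0 u S T T' ->
     torsor_rel k rho' e0' u (gamma_hat S) (phi T) (phi T')) ->
  genus rho = genus rho'.
Proof.
move=> n0 cyc cyc' bphi H.
suff comm : forall x e, phi (rho x e) = rho' x (phi e).
  by rewrite /genus (ncycles_eq bphi comm).
move=> x e; case: k H => H.
- have [n1|n1] := leqP n 1.
    apply: ord_inj; have := ltn_ord (phi (rho x e)); have := ltn_ord (rho' x (phi e)).
    move=> /= H1 H2; lia.
  have := H (~~ x) (Su x) e (rotor rho (~~ x) (Su x) e) (deg0_Su x) erefl.
  rewrite /= /rotor /gamma_hat /Su negbK eqxx.
  have -> : `|(1%R %% Posz n)%Z|%N = 1.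
    by rewrite -[1%R]/(Posz 1) modz_nat modn_small.
  by [].
- have := H x (Su x) e (rho x e) (deg0_Su x) (bern_fwd cyc e0 x e).
  exact: bern_inj.
Qed.
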